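(* Let $\mu$ be a monotone system over $\{0,1\}^V$, $\theta\in(0,1)$ and $T_2\ge1$. For $t\ge1$ define $P^{(t)}_{\mathrm{alg}}=P_{\mathrm{cl}}P_{\mathrm{s\text{-}GD}}$ and $P^{(t)}_{\pi\text{-mGD}}=P_{\mathrm{cl}}P_{\pi\text{-GD}}$ if $(t-1)\bmod T_2=0$, and $P^{(t)}_{\mathrm{alg}}=P_{\mathrm{s\text{-}GD}}$, $P^{(t)}_{\pi\text{-mGD}}=P_{\pi\text{-GD}}$ otherwise. Then $P^{(t)}_{\pi\text{-mGD}}\preceq_{\mathrm{mc}}P^{(t)}_{\mathrm{alg}}$ for all $t\ge1$.
   Context: Monotone system: for every $v$ and all feasible $\sigma\preceq\tau$ in $\{0,1\}^{V\setminus\{v\}}$ (coordinatewise), $\mu^\sigma_v(1)\le\mu^\tau_v(1)$. Tilted $(\theta*\mu)(\sigma)\propto\mu(\sigma)\theta^{\|\sigma\|_1}$. $\mathsf{lift}$: random map $\{0,1\}^V\to\{0,1,\star\}^V$, independently per coordinate $0\mapsto0$, $1\mapsto\star$ w.p. $1-\theta$, $1\mapsto1$ w.p. $\theta$. $\mathsf{contr}$: $0\mapsto0$, $1,\star\mapsto1$. $\pi$: law of $\mathsf{lift}(X)$, $X\sim\mu$, support $\Omega(\pi)$. $P_{\pi\text{-GD}}$: pick $v$ uniformly, resample $X_v$ from $\pi$ given $X_{V\setminus\{v\}}$. $P_{\mathrm{cl}}$: $X\mapsto\mathsf{lift}(\mathsf{contr}(X))$. $P_{\mathrm{s\text{-}GD}}$: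 pick $v$ uniformly; if $X_v=\star$ keep it; otherwise resample $X_v\in\{0,1\}$ from $(\theta*\mu)_v^{\sigma_{V\setminus\{v\}}}$, $\sigma=\mathsf{contr}(X)$. The product $PQ$ means apply $P$ then $Q$. Order $0<1<\star$, coordinatewise partial order. $f:\Omega(\pi)\to\mathbb R_{\ge0}$ is increasing if $X\preceq Y\Rightarrow f(X)\le f(Y)$; $\nu\preceq_{\mathrm{sd}}\nu'$ iff $\mathbb E_\nu f\le\mathbb E_{\nu'}f$ for all increasing $f$. $\mathcal{MC}_\pi$: chains reversible w.r.t. $\pi$ and stochastically monotone ($Pf$ increasing whenever $f$ is). For $P,Q\in\mathcal{MC}_\pi$, $P\preceq_{\mathrm{mc}}Q$ iff for every distribution $\nu$ on $\Omega(\pi)$ such that $\sigma\mapsto\nu(\sigma)/\pi(\sigma)$ is increasing, $\nu P\preceq_{\mathrm{sd}}\nu Q$. *)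

(* Defs.v *)
From HB Require Import structures.
From mathcomp Require Import all_boot all_order all_algebra.
Set Implicit Arguments. Unset Strict Implicit. Unset Printing Implicit Defensive.
Import Order.TTheory GRing.Theory Num.Theory.
Local Open Scope ring_scope.

Section Defs.
Variables (R : realFieldType) (V : finType).

Definition config := {ffun V -> bool}.
(* states in {0,1,star}^V, encoded by 'I_3 with 0 = 0, 1 = 1, 2 = star;
   the order 0 < 1 < star is the order of 'I_3 *)
Definition state := {ffun V -> 'I_3}.

Definition sp0 : 'I_3 := @Ordinal 3 0 isT.
Definition sp1 : 'I_3 := @Ordinal 3 1 isT.
Definition spstar : 'I_3 := @Ordinal 3 2 isT.

Definition le_state (X Y : state) : Prop := forall v, (X v <= Y v)%N.
Definition le_config (s t : config) : Prop := forall v, (s v <= t v)%N.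

Definition updc (s : config) (v : V) (b : bool) : config :=
  [ffun u => if u == v then b else s u].
Definition upds (X : state) (v : V) (c : 'I_3) : state :=
  [ffun u => if u == v then c else X u].

Definition agree_off (v : V) (X Y : state) : bool :=
  [forall u, (u != v) ==> (X u == Y u)].

Definition is_distribution {T : finType} (p : T -> R) : Prop :=
  (forall x, 0 <= p x) /\ \sum_x p x = 1.

Definition condv (rho : config -> R) (v : V) (s : config) (b : bool) : R :=
  rho (updc s v b) / (rho (updc s v false) + rho (updc s v true)).

Definition feasible (rho : config -> R) (v : V) (s : config) : Prop :=
  0 < rho (updc s v false) + rho (updc s v true).

Definition monotone_system (mu : config -> R) : Prop :=
  forall (v : V) (s t : config),
    (forall u, u != v -> (s u <= t u)%N) ->
    feasible mu v s -> feasible mu v t ->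
    condv mu v s true <= condv mu v t true.

Definition ones (s : config) : nat := #|[set u | s u]|.

Definition tilted (mu : config -> R) (theta : R) (s : config) : R :=
  mu s * theta ^+ ones s / \sum_(s' : config) mu s' * theta ^+ ones s'.

Definition contr (X : state) : config := [ffun v => X v != sp0].

(* law of lift(sigma): independently 0 -> 0, 1 -> star w.p. 1-theta,
   1 -> 1 w.p. theta *)
Definition lift_prob (theta : R) (s : config) (Y : state) : R :=
  \prod_(v : V)
    (if s v then
       (if Y v == sp1 then theta else if Y v == spstar then 1 - theta else 0)
     else (if Y v == sp0 then 1 else 0)).

Definition pi (mu : config -> R) (theta : R) (Y : state) : R :=
  \sum_(s : config) mu s * lift_prob theta s Y.

Definition in_support (mu : config -> R) (theta : R) (Y : state) : Prop :=
  0 < pi mu theta Y.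

Definition kernel := state -> state -> R.

Definition kmul (P Q : kernel) : kernel :=
  fun X Z => \sum_(Y : state) P X Y * Q Y Z.

Definition dist_step (nu : state -> R) (P : kernel) : state -> R :=
  fun Y => \sum_(X : state) nu X * P X Y.

Definition P_piGD (mu : config -> R) (theta : R) : kernel :=
  fun X Y => #|V|%:R^-1 * \sum_(v : V)
     (if agree_off v X Y then
        pi mu theta Y / \sum_(c : 'I_3) pi mu theta (upds X v c)
      else 0).

Definition P_cl (theta : R) : kernel :=
  fun X Y => lift_prob theta (contr X) Y.

Definition P_sGD (mu : config -> R) (theta : R) : kernel :=
  fun X Y => #|V|%:R^-1 * \sum_(v : V)
     (if X v == spstar then (if Y == X then 1 else 0)
      else if agree_off v X Y && (Y v != spstar) then
        condv (tilted mu theta) v (contr X) (Y v == sp1)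
      else 0).

Definition P_alg (mu : config -> R) (theta : R) (T2 t : nat) : kernel :=
  if ((t - 1) %% T2 == 0)%N then kmul (P_cl theta) (P_sGD mu theta)
  else P_sGD mu theta.

Definition P_pimGD (mu : config -> R) (theta : R) (T2 t : nat) : kernel :=
  if ((t - 1) %% T2 == 0)%N then kmul (P_cl theta) (P_piGD mu theta)
  else P_piGD mu theta.

Definition increasing_on (mu : config -> R) (theta : R) (f : state -> R) : Prop :=
  forall X Y, in_support mu theta X -> in_support mu theta Y ->
    le_state X Y -> f X <= f Y.

Definition expect_on (mu : config -> R) (theta : R) (nu : state -> R)
  (f : state -> R) : R :=
  \sum_(Y : state | 0 < pi mu theta Y) nu Y * f Y.

Definition sd_le (mu : config -> R) (theta : R) (nu nu' : state -> R) : Prop :=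
  forall f : state -> R,
    (forall Y, in_support mu theta Y -> 0 <= f Y) ->
    increasing_on mu theta f ->
    expect_on mu theta nu f <= expect_on mu theta nu' f.

Definition dist_on_support (mu : config -> R) (theta : R) (nu : state -> R) : Prop :=
  is_distribution nu /\ (forall Y, ~ in_support mu theta Y -> nu Y = 0).

Definition mc_le (mu : config -> R) (theta : R) (P Q : kernel) : Prop :=
  forall nu : state -> R,
    dist_on_support mu theta nu ->
    increasing_on mu theta (fun s => nu s / pi mu theta s) ->
    sd_le mu theta (dist_step nu P) (dist_step nu Q).

End Defs.

(* Main.v *)
Require Import Defs.
From mathcomp Require Import all_boot all_order all_algebra.
From mathcomp Require Import ring lra.
From Stdlib Require Import FunctionalExtensionality.
Import Order.TTheory GRing.Theory Num.Theory.
Local Open Scope ring_scope.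
Set Implicit Arguments. Unset Strict Implicit. Unset Printing Implicit Defensive.

Lemma sum_I3 (R : realFieldType) (F : 'I_3 -> R) :
  \sum_(c : 'I_3) F c = F sp0 + F sp1 + F spstar.
Proof.
rewrite !big_ord_recl big_ord0 addr0 addrA.
by congr (F _ + F _ + F _); apply: val_inj.
Qed.

Lemma upds_v (V : finType) (X : state V) v c : upds X v c v = c.
Proof. by rewrite ffunE eqxx. Qed.

Lemma upds_upds (V : finType) (X : state V) v c d : upds (upds X v d) v c = upds X v c.
Proof. by apply/ffunP=> u; rewrite !ffunE; case: eqP. Qed.

Lemma updc_updc (V : finType) (s : config V) v c d : updc (updc s v d) v c = updc s v c.
Proof. by apply/ffunP=> u; rewrite !ffunE; case: eqP. Qed.

Lemma upds_eq (V : finType) (X Y : state V) v c :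
  (Y == upds X v c) = agree_off v X Y && (c == Y v).
Proof.
apply/eqP/andP.
  move=> ->; split; last by rewrite upds_v.
  by apply/forallP=> u; apply/implyP=> /negPf hu; rewrite ffunE hu.
case=> /forallP H /eqP ->; apply/ffunP=> u; rewrite ffunE.
case: eqP=> [->//|/eqP hu]; by move: (H u); rewrite hu /= => /eqP.
Qed.

Lemma agree_sum (R : realFieldType) (V : finType) (X : state V) v (F : state V -> R) :
  \sum_Y (if agree_off v X Y then F Y else 0) = \sum_(c : 'I_3) F (upds X v c).
Proof.
transitivity (\sum_(c : 'I_3) \sum_Y (if Y == upds X v c then F Y else 0)); last first.
  by apply: eq_bigr=> c _; rewrite -big_mkcond big_pred1_eq.
rewrite exchange_big; apply: eq_bigr=> Y _.
case: ifP=> hA.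
  rewrite (bigD1 (Y v)) //= upds_eq hA eqxx /= big1 ?addr0 // => c hc.
  by rewrite upds_eq hA (negPf hc).
by rewrite big1 // => c _; rewrite upds_eq hA.
Qed.

Lemma base_sum (R : realFieldType) (V : finType) v (F : state V -> R) :
  \sum_(X : state V) F X = \sum_(B : state V) (if B v == sp0 then \sum_(d : 'I_3) F (upds B v d) else 0).
Proof.
transitivity (\sum_(B : state V) (if B v == sp0 then \sum_Y (if agree_off v B Y then F Y else 0) else 0)); last first.
  by apply: eq_bigr=> B _; rewrite agree_sum.
transitivity (\sum_(B : state V) \sum_Y ((B v == sp0)%:R * (if agree_off v B Y then F Y else 0))); last first.
  apply: eq_bigr=> B _; case: eqP=> _; last by rewrite big1 // => Y _; rewrite mul0r.
  by apply: eq_bigr=> Y _; rewrite mul1r.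
rewrite exchange_big; apply: eq_bigr=> Y _.
rewrite (bigD1 (upds Y v sp0)) //= upds_v eqxx /=.
have -> : agree_off v (upds Y v sp0) Y.
  by apply/forallP=> u; apply/implyP=> /negPf hu; rewrite ffunE hu.
rewrite mul1r big1 ?addr0 // => B hB.
case: (B v =P sp0) => hBv; last by rewrite mul0r.
case hA: (agree_off v B Y); last by rewrite mulr0.
exfalso; move/eqP: hB; apply.
apply/ffunP=> u; rewrite ffunE; case: eqP=> [->//|/eqP hu].
by move/forallP: hA => /(_ u); rewrite hu /= => /eqP.
Qed.
Lemma key (R : realFieldType) (a b c h0 h1 h2 g0 g1 g2 : R) : 0 <= a -> 0 <= b -> 0 <= c ->
 (0 < c -> [/\ a*h0 <= a*h2, b*h1 <= b*h2, a*g0 <= a*g2 & b*g1 <= b*g2]) ->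
 (h0*a + h1*b + h2*c) * (a*g0 + b*g1 + c*g2) / (a+b+c)
   <= h2*c*g2 + (h0*a + h1*b) * (a*g0 + b*g1) / (a+b).
Proof.
move=> a0 b0 c0 H.
have [->|cn0] := eqVneq c 0.
  by rewrite !mulr0 !mul0r !addr0 add0r.
have cpos : 0 < c by rewrite lt_def cn0.
case: (H cpos) => H1 H2 H3 H4.
have [pe|pn0] := eqVneq (a + b) 0.
  have ea : a = 0 by move: pe a0 b0; lra.
  have eb : b = 0 by move: pe a0 b0; lra.
  rewrite ea eb !mulr0 !mul0r !add0r ?addr0 !mul0r addr0.
  by have -> : h2*c*(c*g2)/c = h2*c*g2 by field.

have ppos : 0 < a + b by rewrite lt_def pn0 addr_ge0.
have zn0 : a + b + c != 0 by apply/eqP; move: ppos cpos; lra.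
rewrite -subr_ge0.
have -> : h2*c*g2 + (h0*a + h1*b) * (a*g0 + b*g1) / (a+b)
   - (h0*a + h1*b + h2*c) * (a*g0 + b*g1 + c*g2) / (a+b+c)
   = c * (a*h2 - a*h0 + (b*h2 - b*h1)) * (a*g2 - a*g0 + (b*g2 - b*g1)) / ((a+b)*(a+b+c)).
  by field; rewrite ?pn0 ?zn0.
apply: divr_ge0; last by apply: mulr_ge0; move: ppos zn0 cpos a0 b0; lra.
apply: mulr_ge0; first apply: mulr_ge0; move: cpos H1 H2 H3 H4; lra.
Qed.
Section S.
Variables (R : realFieldType) (V : finType) (mu : config V -> R) (theta : R).
Hypothesis mu_ge0 : forall s, 0 <= mu s.
Hypothesis th0 : 0 < theta.
Hypothesis th1 : theta < 1.
Local Notation piY := (Defs.pi mu theta).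

Definition fac (b : bool) (c : 'I_3) : R :=
  if b then (if c == sp1 then theta else if c == spstar then 1 - theta else 0)
  else (if c == sp0 then 1 else 0).

Lemma liftE (s : config V) (Y : state V) : lift_prob theta s Y = \prod_v fac (s v) (Y v).
Proof. by []. Qed.

Lemma I3_cases (c : 'I_3) : [\/ c = sp0, c = sp1 | c = spstar].
Proof.
case: c => [[|[|[|n]]] hn]; first by constructor 1; apply: val_inj.
  by constructor 2; apply: val_inj.
  by constructor 3; apply: val_inj.
done.
Qed.

Lemma fac_ge0 b c : 0 <= fac b c.
Proof. rewrite /fac; case: b; repeat case: ifP => _; move: th0 th1; try lra. Qed.

Lemma fac_pos c : 0 < fac (c != sp0) c.
Proof. by case: (I3_cases c) => ->; rewrite /fac /=; move: th0 th1; lra. Qed.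

Lemma fac_contr b c : b != (c != sp0) -> fac b c = 0.
Proof. by case: (I3_cases c) => ->; case: b. Qed.

Lemma sum_fac b : \sum_c fac b c = 1.
Proof. rewrite sum_I3 /fac; case: b => /=; lra. Qed.

Lemma lift_ge0 (s : config V) (Y : state V) : 0 <= lift_prob theta s Y.
Proof. by apply: prodr_ge0 => v _; apply: fac_ge0. Qed.

Lemma lift_pos (Y : state V) : 0 < lift_prob theta (contr Y) Y.
Proof. by apply: prodr_gt0 => v _; rewrite ffunE; apply: fac_pos. Qed.

Lemma neq_ffun (T : finType) (s t : {ffun V -> T}) : s != t -> exists u, s u != t u.
Proof.
move=> H; apply/existsP; rewrite -negb_forall; apply: contra H => /forallP h.
by apply/eqP/ffunP => u; apply/eqP; exact: h u.
Qed.

Lemma lift0 (s : config V) (Y : state V) : s != contr Y -> lift_prob theta s Y = 0.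
Proof.
move/neq_ffun=> [u hu]; rewrite liftE (bigD1 u) //= fac_contr ?mul0r //.
by move: hu; rewrite ffunE.
Qed.

Lemma piE (Y : state V) : piY Y = mu (contr Y) * lift_prob theta (contr Y) Y.
Proof.
rewrite /Defs.pi (bigD1 (contr Y)) //= big1 ?addr0 // => s hs.
by rewrite lift0 ?mulr0.
Qed.

Lemma pi_ge0 (Y : state V) : 0 <= piY Y.
Proof. by rewrite piE mulr_ge0 ?lift_ge0. Qed.

Lemma supp_iff (Y : state V) : (0 < piY Y) = (0 < mu (contr Y)).
Proof. by rewrite piE pmulr_lgt0 // lift_pos. Qed.

Lemma sum_lift (s : config V) : \sum_(Y : state V) lift_prob theta s Y = 1.
Proof.
have := @bigA_distr_bigA R 0 1 *%R +%R V 'I_3 (fun i (c : 'I_3) => fac (s i) c).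
rewrite big1 => [E|i _]; last exact: sum_fac.
by rewrite E.
Qed.


Definition psi (s : config V) (X : state V) : state V :=
  [ffun u => if s u then X u else sp0].

Lemma ind_prod (s : config V) (X' X : state V) :
  ((psi s X' == X)%:R : R) = \prod_u (((if s u then X' u else sp0) == X u)%:R : R).
Proof.
case: eqP => [<-|hne].
  by rewrite big1 // => u _; rewrite ffunE eqxx.
have [u hu] : exists u, psi s X' u != X u by apply: neq_ffun; apply/eqP.
by rewrite (bigD1 u) //= -[if s u then _ else _](ffunE (fun u => if s u then X' u else sp0)) (negPf hu) mul0r.
Qed.

Lemma push (s s' : config V) (hle : forall u, s u ==> s' u) (g : state V -> R) :
  \sum_(X' : state V) lift_prob theta s' X' * g (psi s X') =
  \sum_(X : state V) lift_prob theta s X * g X.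
Proof.
transitivity (\sum_(X' : state V) \sum_(X : state V)
   (psi s X' == X)%:R * lift_prob theta s' X' * g X).
  apply: eq_bigr => X' _; rewrite (bigD1 (psi s X')) //= eqxx mul1r big1 ?addr0 //.
  by move=> X hX; rewrite eq_sym (negPf hX) !mul0r.
rewrite exchange_big; apply: eq_bigr => X _; rewrite -big_distrl /=; congr (_ * _).
under eq_bigr do rewrite ind_prod liftE -big_split /=.
have := @bigA_distr_bigA R 0 1 *%R +%R V 'I_3
  (fun u (c : 'I_3) => ((if s u then c else sp0) == X u)%:R * fac (s' u) c).
move=> <-; rewrite liftE; apply: eq_bigr => u _.
move: (hle u); case: (s u) => /= [hs | _].
  rewrite hs (bigD1 (X u)) //= eqxx mul1r big1 ?addr0 // => c hc.
  by rewrite (negPf hc) mul0r.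
under eq_bigr do rewrite eq_sym.
rewrite -big_distrr /= sum_fac mulr1 /fac.
by case: (X u == sp0).
Qed.

Lemma contr_psi (s : config V) (X : state V) :
  (forall u, s u ==> contr X u) -> contr (psi s X) = s.
Proof.
move=> hle; apply/ffunP => u; rewrite !ffunE.
by move: (hle u); rewrite ffunE; case: (s u) => //= _; rewrite ?eqxx.
Qed.

Definition gl (h : state V -> R) (s : config V) : R :=
  \sum_(X : state V) lift_prob theta s X * h X.

Lemma gl_mono (h : state V -> R) : increasing_on mu theta h ->
  forall s s' : config V, le_config s s' -> 0 < mu s -> 0 < mu s' -> gl h s <= gl h s'.
Proof.
move=> hinc s s' hle ms ms'.
have hle' : forall u, s u ==> s' u.
  by move=> u; move: (hle u); case: (s u); case: (s' u).
rewrite /gl -(push hle'); apply: ler_sum => X' _.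
case: (eqVneq s' (contr X')) => [E|ne]; last by rewrite lift0 // !mul0r.
apply: ler_wpM2l; first exact: lift_ge0.
have hc : contr (psi s X') = s by apply: contr_psi; rewrite -E.
apply: hinc.
- by rewrite /in_support supp_iff hc.
- by rewrite /in_support supp_iff -E.
- move=> u; rewrite ffunE; case: (s u) => //.
Qed.

Lemma nu_h (nu : state V -> R) : (forall Y, ~ in_support mu theta Y -> nu Y = 0) ->
  forall X, nu X = nu X / piY X * piY X.
Proof.
move=> hoff X; case: (ltrP 0 (piY X)) => hp.
  by rewrite divfK // gt_eqF.
have p0 : piY X = 0 by apply/eqP; rewrite eq_le hp pi_ge0.
by rewrite p0 mulr0 hoff // /in_support p0 ltxx.
Qed.

Lemma cl_step (nu : state V -> R) : (forall Y, ~ in_support mu theta Y -> nu Y = 0) ->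
  forall Y, dist_step nu (P_cl theta) Y = piY Y * gl (fun X => nu X / piY X) (contr Y).
Proof.
move=> hoff Y; rewrite /dist_step /P_cl /gl big_distrr /=; apply: eq_bigr => X _.
rewrite {1}(nu_h hoff X) [piY X]piE.
case: (eqVneq (contr X) (contr Y)) => E.
  rewrite E [piY Y]piE /=; ring.
rewrite (lift0 (s := contr X) (Y := Y)) // (lift0 (s := contr Y) (Y := X)) 1?eq_sym //.
by rewrite mulr0 mul0r mulr0.
Qed.


Hypothesis mu_sum : \sum_s mu s = 1.

Lemma contr_upds (X : state V) v c : contr (upds X v c) = updc (contr X) v (c != sp0).
Proof. by apply/ffunP => u; rewrite !ffunE; case: (u == v). Qed.

Definition Wt (X : state V) v := \prod_(u | u != v) fac (contr X u) (X u).

Lemma W_pos X v : 0 < Wt X v.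
Proof. by apply: prodr_gt0 => u _; rewrite ffunE; apply: fac_pos. Qed.

Lemma pi_upds (X : state V) v c :
  piY (upds X v c) = mu (updc (contr X) v (c != sp0)) * fac (c != sp0) c * Wt X v.
Proof.
rewrite piE contr_upds liftE (bigD1 v) //= !ffunE !eqxx mulrA; congr (_ * _).
by apply: eq_bigr => u hu; rewrite !ffunE (negPf hu).
Qed.

Lemma ones_updc (s : config V) v : ones (updc s v true) = (ones (updc s v false)).+1.
Proof.
rewrite /ones (_ : [set u | updc s v true u] = v |: [set u | updc s v false u]).
  by rewrite cardsU1 inE ffunE eqxx.
by apply/setP => u; rewrite !inE !ffunE; case: eqP.
Qed.

Lemma Zt_pos : 0 < \sum_(s : config V) mu s * theta ^+ ones s.
Proof.
have ge : forall s : config V, 0 <= mu s * theta ^+ ones s.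
  by move=> s; rewrite mulr_ge0 // exprn_ge0 // ltW.
rewrite lt_def sumr_ge0 // andbT; apply/eqP => E.
have : \sum_s mu s = 0.
  apply: big1 => s _; have := @psumr_eq0P _ _ _ _ (fun s _ => ge s) E s isT.
  by move/eqP; rewrite mulf_eq0 expf_eq0 (gt_eqF th0) andbF orbF => /eqP.
by rewrite mu_sum => /eqP; rewrite oner_eq0.
Qed.

Lemma canc (x y z : R) : x != 0 -> (y * x) / (z * x) = y / z.
Proof. by move=> hx; rewrite invfM mulrACA mulfV // mulr1. Qed.

Lemma condv_formula (X : state V) v b :
  condv (tilted mu theta) v (contr X) b =
  piY (upds X v (if b then sp1 else sp0)) / (piY (upds X v sp0) + piY (upds X v sp1)).
Proof.
have F0 : fac (sp0 != sp0) sp0 = 1 by [].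
have F1 : fac (sp1 != sp0) sp1 = theta by [].
have Wn0 : Wt X v != 0 by rewrite gt_eqF ?W_pos.
case: b; rewrite !pi_upds /condv /tilted /=;
set Z := \sum_(s : config V) _;
set m0 := mu (updc (contr X) v false);
set m1 := mu (updc (contr X) v true);
rewrite ones_updc exprS;
set k := ones (updc (contr X) v false);
set t := theta ^+ k / Z;
(have tn0 : t != 0 by rewrite /t mulf_neq0 ?invr_eq0 ?expf_neq0 ?gt_eqF ?Zt_pos);
(have T0 : m0 * theta ^+ k / Z = m0 * t by rewrite /t mulrA);
(have T1 : m1 * (theta * theta ^+ k) / Z = (m1 * theta) * t by rewrite /t; ring);
rewrite !mulr1 T0 T1 -!mulrDl !canc //.
Qed.
Definition Pv (v : V) : kernel R V := fun X Y =>
  if agree_off v X Y then piY Y / \sum_(c : 'I_3) piY (upds X v c) else 0.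
Definition Qv (v : V) : kernel R V := fun X Y =>
  if X v == spstar then (if Y == X then 1 else 0)
  else if agree_off v X Y && (Y v != spstar) then
    condv (tilted mu theta) v (contr X) (Y v == sp1)
  else 0.

Lemma le_upds (X : state V) v (c d : 'I_3) : (c <= d)%N -> le_state (upds X v c) (upds X v d).
Proof. by move=> hcd u; rewrite !ffunE; case: (u == v). Qed.

Lemma mono_pair (F : state V -> R) (X : state V) v (c d : 'I_3) :
  increasing_on mu theta F -> (c <= d)%N -> 0 < piY (upds X v d) ->
  piY (upds X v c) * F (upds X v c) <= piY (upds X v c) * F (upds X v d).
Proof.
move=> hF hcd hd.
have [->|an0] := eqVneq (piY (upds X v c)) 0; first by rewrite !mul0r.
have apos : 0 < piY (upds X v c) by rewrite lt_def an0 pi_ge0.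
by apply: ler_wpM2l; [exact: ltW | apply: hF => //; apply: le_upds].
Qed.

Lemma site (nu G : state V -> R) v :
  (forall Y, ~ in_support mu theta Y -> nu Y = 0) ->
  increasing_on mu theta (fun s => nu s / piY s) ->
  increasing_on mu theta G ->
  \sum_Y (\sum_X nu X * Pv v X Y) * G Y <= \sum_Y (\sum_X nu X * Qv v X Y) * G Y.
Proof.
move=> hoff hinc hG.
have swap : forall K : kernel R V, \sum_Y (\sum_X nu X * K X Y) * G Y =
    \sum_X nu X * \sum_Y K X Y * G Y.
  move=> K; under eq_bigr do rewrite big_distrl /=.
  rewrite exchange_big; apply: eq_bigr => X _; rewrite big_distrr /=.
  by apply: eq_bigr => Y _; rewrite mulrA.
rewrite !swap.
have EP : forall X, \sum_Y Pv v X Y * G Y =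
   \sum_(c : 'I_3) piY (upds X v c) / (\sum_(d : 'I_3) piY (upds X v d)) * G (upds X v c).
  move=> X; rewrite -(agree_sum X v (fun Y => piY Y / (\sum_(d : 'I_3) piY (upds X v d)) * G Y)).
  apply: eq_bigr => Y _; rewrite /Pv.
  by case: ifP => _ //; rewrite mul0r.
have EQ : forall X, \sum_Y Qv v X Y * G Y =
   if X v == spstar then G X else
   \sum_(c : 'I_3) (if c != spstar then
      condv (tilted mu theta) v (contr X) (c == sp1) * G (upds X v c) else 0).
  move=> X; rewrite /Qv; case: ifP => hX.
    rewrite (bigD1 X) //= eqxx mul1r big1 ?addr0 // => Y hY.
    by rewrite (negPf hY) mul0r.
  transitivity (\sum_(c : 'I_3) (fun Y : state V => if Y v != spstar then
      condv (tilted mu theta) v (contr X) (Y v == sp1) * G Y else 0) (upds X v c)); last first.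
    by apply: eq_bigr => c _; rewrite /= upds_v.
  rewrite -(agree_sum X v (fun Y : state V => if Y v != spstar then
      condv (tilted mu theta) v (contr X) (Y v == sp1) * G Y else 0)).
  apply: eq_bigr => Y _.
  by case: (agree_off v X Y); case: (Y v != spstar) => //=; rewrite mul0r.
rewrite (eq_bigr _ (fun X _ => congr1 (fun w => nu X * w) (EP X))).
rewrite (eq_bigr _ (fun X _ => congr1 (fun w => nu X * w) (EQ X))).
rewrite [X in X <= _](base_sum v) [X in _ <= X](base_sum v).
apply: ler_sum => B _; case: ifP => hB //.
rewrite !sum_I3 !upds_upds !upds_v !condv_formula !upds_upds /=.
have hbc : (0 < piY (upds B v sp1)) = (0 < piY (upds B v spstar)).
  by rewrite !supp_iff !contr_upds.
have C : 0 < piY (upds B v spstar) -> [/\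
   piY (upds B v sp0) * (nu (upds B v sp0) / piY (upds B v sp0)) <=
     piY (upds B v sp0) * (nu (upds B v spstar) / piY (upds B v spstar)),
   piY (upds B v sp1) * (nu (upds B v sp1) / piY (upds B v sp1)) <=
     piY (upds B v sp1) * (nu (upds B v spstar) / piY (upds B v spstar)),
   piY (upds B v sp0) * G (upds B v sp0) <= piY (upds B v sp0) * G (upds B v spstar) &
   piY (upds B v sp1) * G (upds B v sp1) <= piY (upds B v sp1) * G (upds B v spstar)].
  move=> hc; split.
  - exact: (mono_pair (F := fun s => nu s / piY s)).
  - exact: (mono_pair (F := fun s => nu s / piY s)).
  - exact: (mono_pair (F := G)).
  - exact: (mono_pair (F := G)).
rewrite (nu_h hoff (upds B v sp0)) (nu_h hoff (upds B v sp1)) (nu_h hoff (upds B v spstar)).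
move: C.
set a := piY (upds B v sp0).
set b := piY (upds B v sp1).
set c := piY (upds B v spstar).
set h0 := nu (upds B v sp0) / a.
set h1 := nu (upds B v sp1) / b.
set h2 := nu (upds B v spstar) / c.
set g0 := G (upds B v sp0).
set g1 := G (upds B v sp1).
set g2 := G (upds B v spstar).
move=> C.
have K := key (pi_ge0 (upds B v sp0)) (pi_ge0 (upds B v sp1)) (pi_ge0 (upds B v spstar)) C.
rewrite -/a -/b -/c in K.
apply: (le_trans _ (le_trans K _)).
  by rewrite le_eqVlt; apply/orP; left; apply/eqP; rewrite /=; ring.
by rewrite le_eqVlt; apply/orP; left; apply/eqP; rewrite /=; ring.
Qed.
Lemma split_sum (nu G : state V -> R) (k : R) (K : V -> kernel R V) :
  \sum_Y (\sum_X nu X * (k * \sum_v K v X Y)) * G Y =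
  k * \sum_v \sum_Y (\sum_X nu X * K v X Y) * G Y.
Proof.
transitivity (\sum_Y \sum_X \sum_v k * (nu X * K v X Y * G Y)).
  apply: eq_bigr => Y _; rewrite big_distrl /=; apply: (@eq_bigr _ _ _ (state V)) => X _.
  rewrite !big_distrr /= big_distrl /=; apply: eq_bigr => v _; ring.
symmetry; rewrite big_distrr /=.
under eq_bigr do rewrite big_distrr /=.
rewrite exchange_big /=; apply: eq_bigr => Y _.
rewrite [RHS]exchange_big /=; apply: eq_bigr => v _.
rewrite big_distrl /= big_distrr /=; apply: eq_bigr => X _; ring.
Qed.

Lemma main_gd (nu : state V -> R) :
  dist_on_support mu theta nu ->
  increasing_on mu theta (fun s => nu s / piY s) ->
  sd_le mu theta (dist_step nu (P_piGD mu theta)) (dist_step nu (P_sGD mu theta)).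
Proof.
move=> [_ hoff] hinc f _ hf.
set G := fun Y => if 0 < piY Y then f Y else 0.
have hG : increasing_on mu theta G.
  by move=> X Y hX hY hXY; rewrite /G hX hY; apply: hf.
have E : forall P : kernel R V, expect_on mu theta (dist_step nu P) f =
    \sum_Y (\sum_X nu X * P X Y) * G Y.
  move=> P; rewrite /expect_on big_mkcond; apply: eq_bigr => Y _.
  by rewrite /G; case: ifP => _ //; rewrite mulr0.
rewrite !E /P_piGD /P_sGD.
rewrite (split_sum nu G (#|V|%:R^-1) Pv) (split_sum nu G (#|V|%:R^-1) Qv).
apply: ler_wpM2l; first by rewrite invr_ge0 ler0n.
apply: ler_sum => v _; exact: site.
Qed.

Lemma le_contr (X Y : state V) : le_state X Y -> le_config (contr X) (contr Y).
Proof.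
move=> hle u; rewrite !ffunE.
case hX: (X u == sp0) => //=.
case hY: (Y u == sp0) => //=.
move: (hle u); rewrite (eqP hY) /= leqn0 => h.
by move/negbT: hX; rewrite -(inj_eq val_inj) /= h.
Qed.

Lemma main_cl (nu : state V -> R) :
  dist_on_support mu theta nu ->
  increasing_on mu theta (fun s => nu s / piY s) ->
  sd_le mu theta (dist_step nu (kmul (P_cl theta) (P_piGD mu theta)))
                 (dist_step nu (kmul (P_cl theta) (P_sGD mu theta))).
Proof.
move=> [[nu_ge0 nu_sum] hoff] hinc.
have E : forall P, dist_step nu (kmul (P_cl theta) P) = dist_step (dist_step nu (P_cl theta)) P.
  move=> P; apply: functional_extensionality => Z; rewrite /dist_step /kmul.
  under eq_bigr do rewrite big_distrr /=.
  rewrite exchange_big; apply: eq_bigr => Y _; rewrite big_distrl /=.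
  by apply: eq_bigr => X _; rewrite mulrA.
rewrite !E; apply: main_gd.
  split; last first.
    move=> Y hY; rewrite cl_step //.
    have : piY Y = 0 by apply/eqP; rewrite eq_le pi_ge0 andbT leNgt; apply/negP.
    by move=> ->; rewrite mul0r.
  split.
    move=> Y; apply: sumr_ge0 => X _; apply: mulr_ge0 => //; exact: lift_ge0.
  rewrite /dist_step exchange_big /=.
  transitivity (\sum_X nu X); last by [].
  apply: eq_bigr => X _; rewrite -big_distrr /= /P_cl sum_lift mulr1 //.
move=> X Y hX hY hXY.
rewrite /= !cl_step // ![piY _ * _]mulrC !mulfK ?gt_eqF //.
apply: gl_mono => //; first exact: le_contr.
  by rewrite -supp_iff.
by rewrite -supp_iff.
Qed.

End S.

Unset Implicit Arguments.

Theorem lemma3p6 (R : realFieldType) (V : finType) (mu : config V -> R)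
  (theta : R) (T2 : nat) :
  (0 < #|V|)%N ->
  is_distribution mu ->
  monotone_system mu ->
  0 < theta < 1 ->
  (1 <= T2)%N ->
  forall t : nat, (1 <= t)%N ->
    mc_le mu theta (P_pimGD mu theta T2 t) (P_alg mu theta T2 t).
Proof.
move=> _ [mu_ge0 mu_sum] _ /andP [th0 th1] _ t _ nu hd hinc.
rewrite /P_pimGD /P_alg; case: ifP => _.
  exact: main_cl.
exact: main_gd.
Qed.
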